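(* Assume $\mu$ satisfies $(\mathrm H_\mu)$ and define $\ell$ and $Q_n$ as in the context. There is a constant $C>0$ such that for every $n\ge1$, \[ \frac{1}{1-\ell(Q_n)}\cdot\frac{\ell(Q_n)}{\ell(Q_{n+1})}\le1+C\,\ell(Q_n). \]
   Context: Condition $(\mathrm H_\mu)$: $\mu=(\mu_k)_{k\ge0}$ is a probability measure on $\mathbb Z_+$ with $\sum_k k\mu_k=1$, and there is a slowly varying function $L:\mathbb R_+\to\mathbb R_+$ with $\mu_n=L(n)/n^2$ for all $n\ge1$. Let $G_\mu(s)=\sum_k\mu_ks^k$ and for $s\in(0,1]$ let $\ell(s)=\big(G_\mu(1-s)-(1-s)\big)/s$, so $G_\mu(s)=s+(1-s)\ell(1-s)$. Let $Q_n=\mathbf P(\mathcal H\ge n)$ where $\mathcal H$ is the height (maximal distance of a vertex from the root) of a $\mu$-Bienaymé (Galton–Watson) tree; then $Q_{n+1}=Q_n(1-\ell(Q_n))$. *)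

(* Defs.v *)
From HB Require Import structures.
From mathcomp Require Import all_boot all_order all_algebra.
From mathcomp Require Import all_classical all_reals all_analysis.
Set Implicit Arguments. Unset Strict Implicit. Unset Printing Implicit Defensive.
Import Order.TTheory GRing.Theory Num.Theory.
Import numFieldNormedType.Exports.
Local Open Scope classical_set_scope.
Local Open Scope ring_scope.

Definition slowly_varying (R : realType) (L : R -> R) : Prop :=
  measurable_fun [set x : R | 0 < x] L /\
  (forall x : R, 0 < x -> 0 < L x) /\
  (forall a : R, 0 < a -> (fun x => L (a * x) / L x) @ +oo --> (1 : R)).

Definition H_mu (R : realType) (mu : nat -> R) : Prop :=
  (forall k, 0 <= mu k) /\
  series mu @ \oo --> (1 : R) /\
  series (fun k => k%:R * mu k) @ \oo --> (1 : R) /\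
  exists L : R -> R, slowly_varying L /\
    forall n : nat, (1 <= n)%N -> mu n = L n%:R / (n%:R ^+ 2).

Definition Gmu (R : realType) (mu : nat -> R) (s : R) : R :=
  limn (series (fun k => mu k * s ^+ k)).

Definition ell (R : realType) (mu : nat -> R) (s : R) : R :=
  (Gmu mu (1 - s) - (1 - s)) / s.

(* Q_n = P(height >= n) for a mu-Bienayme tree, given by the standard
   recursion Q_0 = 1, Q_{n+1} = 1 - G_mu(1 - Q_n)
   (equivalently Q_{n+1} = Q_n (1 - ell(Q_n))). *)
Fixpoint Q (R : realType) (mu : nat -> R) (n : nat) : R :=
  match n with
  | 0 => 1
  | n'.+1 => 1 - Gmu mu (1 - Q mu n')
  end.

(* Main.v *)
Require Import Defs.
From HB Require Import structures.
From mathcomp Require Import all_boot all_order all_algebra.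
From mathcomp Require Import all_classical all_reals all_analysis.
From mathcomp Require Import ring lra.
Set Implicit Arguments. Unset Strict Implicit.
Import Order.TTheory GRing.Theory Num.Theory.
Import numFieldNormedType.Exports.
Local Open Scope classical_set_scope.
Local Open Scope ring_scope.

Section Aux.
Variable R : realType.
Implicit Types s t : R.

Definition aa s k : R := \sum_(i < k) (1 - (1 - s) ^+ i).
Definition bb s k : R := \sum_(i < k) \sum_(m < i) (1 - s) ^+ m.

Lemma geom_id s i : 1 - (1 - s) ^+ i = s * \sum_(m < i) (1 - s) ^+ m.
Proof.
elim: i => [|i IH]; first by rewrite big_ord0 expr0 subrr mulr0.
rewrite big_ord_recr /= mulrDr -IH exprSr; ring.
Qed.

Lemma aa_bb s k : aa s k = s * bb s k.
Proof. by rewrite /aa /bb mulr_sumr; apply: eq_bigr => i _; rewrite geom_id. Qed.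

Lemma g_aa s k : (1 - s) ^+ k - 1 + k%:R * s = s * aa s k.
Proof.
elim: k => [|k IH]; first by rewrite /aa big_ord0 expr0 mulr0 mul0r subrr addr0.
rewrite /aa big_ord_recr /= -/(aa s k) mulrDr -IH exprSr -natr1; ring.
Qed.

Lemma pow_mono s t m : 0 <= t -> t <= s -> s <= 1 -> (1 - s) ^+ m <= (1 - t) ^+ m.
Proof.
move=> t0 ts s1; apply: lerXn2r; rewrite ?nnegrE; lra.
Qed.

Lemma pow_le1 s m : 0 <= s -> s <= 1 -> (1 - s) ^+ m <= 1.
Proof. move=> s0 s1; apply: exprn_ile1; lra. Qed.

Lemma aa_ge0 s k : 0 <= s -> s <= 1 -> 0 <= aa s k.
Proof.
move=> s0 s1; apply: sumr_ge0 => i _; rewrite subr_ge0; exact: pow_le1.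
Qed.

Lemma aa_mono s t k : 0 <= t -> t <= s -> s <= 1 -> aa t k <= aa s k.
Proof.
move=> t0 ts s1; apply: ler_sum => i _; rewrite lerB //; exact: pow_mono.
Qed.

Lemma bb_mono s t k : 0 <= t -> t <= s -> s <= 1 -> bb s k <= bb t k.
Proof.
move=> t0 ts s1; apply: ler_sum => i _; apply: ler_sum => m _; exact: pow_mono.
Qed.

End Aux.

Section Main.
Variable R : realType.
Variable mu : nat -> R.
Hypothesis mu0 : forall k, 0 <= mu k.
Hypothesis muM : series mu @ \oo --> (1 : R).
Hypothesis muK : series (fun k => k%:R * mu k) @ \oo --> (1 : R).

Lemma M_le1 n : series mu n <= 1.
Proof.
have nd : nondecreasing_seq (series mu).
  by apply/nondecreasing_seqP => m; rewrite seriesSr lerDl.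
have := nondecreasing_cvgn_le nd (cvgP _ muM) n.
by rewrite (cvg_lim _ muM).
Qed.

Lemma G_cvg x : 0 <= x -> x <= 1 -> cvgn (series (fun k => mu k * x ^+ k)).
Proof.
move=> x0 x1; apply: nondecreasing_is_cvgn.
  apply/nondecreasing_seqP => m; rewrite seriesSr lerDl.
  by apply: mulr_ge0 => //; exact: exprn_ge0.
exists 1 => _ [n _ <-]; apply: le_trans (M_le1 n).
rewrite /series /=; apply: ler_sum => k _; apply: ler_piMr => //.
exact: exprn_ile1.
Qed.

Lemma P_id s N : series (fun k => mu k * (1 - s) ^+ k) N - series mu N
   + s * series (fun k => k%:R * mu k) N = s * series (fun k => mu k * aa s k) N.
Proof.
elim: N => [|N IH].
  by rewrite /series /= !big_geq //; ring.
rewrite !seriesSr !mulrDr -IH; rewrite [s * (mu N * _)]mulrCA -g_aa; ring.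
Qed.

Lemma ell_lim s : 0 < s -> s <= 1 ->
  series (fun k => mu k * aa s k) @ \oo --> ell mu s.
Proof.
move=> s0 s1.
have -> : series (fun k => mu k * aa s k) = (fun N =>
   (series (fun k => mu k * (1 - s) ^+ k) N - series mu N
   + s * series (fun k => k%:R * mu k) N) * s^-1).
  apply/funext => N; rewrite P_id mulrC mulrA mulVf ?mul1r // gt_eqF //.
have -> : ell mu s = (Gmu mu (1 - s) - 1 + s * 1) * s^-1.
  by rewrite /ell; congr (_ * _); ring.
apply: cvgMr_tmp; apply: cvgD; last exact: cvgMl_tmp.
apply: cvgB => //; rewrite /Gmu; apply: G_cvg; lra.
Qed.

Lemma ser_bb s N : series (fun k => mu k * aa s k) N = s * series (fun k => mu k * bb s k) N.
Proof.
rewrite /series /= mulr_sumr; apply: eq_bigr => k _; by rewrite aa_bb mulrCA.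
Qed.

Lemma ell_ge0 s : 0 < s -> s <= 1 -> 0 <= ell mu s.
Proof.
move=> s0 s1; apply: (cvgr_to_ge (ell_lim s0 s1)); apply: nearW => N.
rewrite /series /=; apply: sumr_ge0 => k _; apply: mulr_ge0 => //.
apply: aa_ge0 => //; exact: ltW.
Qed.

Lemma ell_le1 s : 0 < s -> s <= 1 -> ell mu s <= ell mu 1.
Proof.
move=> s0 s1; apply: (ler_cvg_to (ell_lim s0 s1) (ell_lim ltr01 (lexx 1))).
apply: nearW => N; rewrite /series /=; apply: ler_sum => k _.
apply: ler_wpM2l => //; apply: aa_mono => //; exact: ltW.
Qed.

Lemma ell_ratio s t : 0 < t -> t <= s -> s <= 1 -> ell mu s * t <= ell mu t * s.
Proof.
move=> t0 ts s1; have s0 : 0 < s by apply: lt_le_trans ts.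
apply: (ler_cvg_to (@cvgMr_tmp _ _ _ _ _ _ t (ell_lim s0 s1)) (@cvgMr_tmp _ _ _ _ _ _ s (ell_lim t0 (le_trans ts s1)))).
apply: nearW => N /=; rewrite !ser_bb.
have hB : series (fun k => mu k * bb s k) N <= series (fun k => mu k * bb t k) N.
  rewrite /series /=; apply: ler_sum => k _; apply: ler_wpM2l => //.
  apply: bb_mono => //; exact: ltW.
have hst : 0 <= s * t by apply: mulr_ge0; apply: ltW.
nra.
Qed.

Hypothesis mu1 : 0 < mu 1.

Lemma ell1_lt1 : ell mu 1 < 1.
Proof.
rewrite /ell subrr subr0 divr1.
have h : Gmu mu 0 <= mu 0.
  apply: limr_le; first by apply: G_cvg => //; exact: ler01.
  apply: nearW => -[|N]; first by rewrite /series /= big_geq.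
  rewrite /series /= big_nat_recl // expr0 mulr1 big1 ?addr0 // => i _.
  by rewrite expr0n /= mulr0.
have := M_le1 2; rewrite /series /= !big_nat_recr // big_geq //= add0r.
move=> hm; apply: le_lt_trans h _.
apply: (lt_le_trans _ hm); by rewrite ltrDl.
Qed.

Lemma Qstep s : s != 0 -> 1 - Gmu mu (1 - s) = s * (1 - ell mu s).
Proof. move=> s0; rewrite /ell; by field. Qed.

Lemma Q_bounds n : 0 < Q mu n <= 1.
Proof.
elim: n => [|n IH]; first by rewrite /= ltr01 lexx.
case/andP: IH => q0 q1.
rewrite /= Qstep ?gt_eqF //.
have h0 := ell_ge0 q0 q1; have h1 := ell_le1 q0 q1; have h2 := ell1_lt1.
apply/andP; split; nra.
Qed.

End Main.

Theorem mainTheorem8 (R : realType) (mu : nat -> R) :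
  H_mu mu ->
  exists C : R, 0 < C /\
    forall n : nat, (1 <= n)%N ->
      (1 - ell mu (Q mu n))^-1 * (ell mu (Q mu n) / ell mu (Q mu n.+1))
        <= 1 + C * ell mu (Q mu n).
Proof.
move=> [mu0 [muM [muK [L [[_ [Lpos _]] Lmu]]]]].
have mu1 : 0 < mu 1.
  rewrite Lmu // expr1n divr1; apply: Lpos; exact: ltr01.
set c := ell mu 1.
have c1 : c < 1 by exact: (ell1_lt1 mu0 muM mu1).
have c0 : 0 < 1 - c by rewrite subr_gt0.
exists (2 / (1 - c) ^+ 2); split.
  by apply: divr_gt0 => //; apply: exprn_gt0.
move=> n _.
set C := 2 / (1 - c) ^+ 2.
have /andP [s0 s1] := Q_bounds mu0 muM muK mu1 n.
set s := Q mu n.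
set x := ell mu s.
have x0 : 0 <= x := ell_ge0 mu0 muM muK s0 s1.
have xc : x <= c := ell_le1 mu0 muM muK s0 s1.
have /andP [t0 t1] := Q_bounds mu0 muM muK mu1 n.+1.
have tE : Q mu n.+1 = s * (1 - x) by rewrite /= Qstep ?gt_eqF.
set t := Q mu n.+1 in t0 t1 tE *.
set y := ell mu t.
have y0 : 0 <= y := ell_ge0 mu0 muM muK t0 t1.
have ts : t <= s by rewrite tE; nra.
have hr := ell_ratio mu0 muM muK t0 ts s1.
rewrite -/x -/y tE in hr.
have h2 : x * (1 - x) <= y.
  have : s * (x * (1 - x)) <= s * y by nra.
  by rewrite ler_pM2l.
have hC : 2 <= C * (1 - x) ^+ 2.
  rewrite /C mulrAC ler_pdivlMr; last exact: exprn_gt0.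
  nra.
have h1 : 1 <= (1 + C * x) * (1 - x) ^+ 2 by nra.
have C0 : 0 <= C by apply: divr_ge0 => //; apply: exprn_ge0; exact: ltW.
have x1 : 0 < 1 - x by lra.
have [->|yp] := eqVneq y 0.
  rewrite invr0 !mulr0; nra.
have ypos : 0 < y by rewrite lt_neqAle eq_sym yp y0.
rewrite mulrCA -invfM ler_pdivrMr; last exact: mulr_gt0.
have h3 : 0 <= (1 + C * x) * (1 - x) by nra.
nra.
Qed.
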